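(* Let $\nu$ be a compactly supported probability measure on $\mathbb{R}$ with infinite support, let $\beta\in\mathbb{R}$, $\gamma>0$, and let $\mu = \Phi_{\beta,\gamma}[\nu]$. Let $\{P^\mu_n\}_{n\ge0}$ be the monic orthogonal polynomials of $\mu$. Then, for the operator \[ Q = L_\nu L_\mu - \gamma^{-1}(x - \beta) L_\mu \] on $\mathbb{R}[x]$, one has $Q[P^\mu_n] = -\gamma^{-1} P^\mu_n$ for all $n \ge 1$ (and $Q[P^\mu_0] = 0$). Equivalently, $Q[f] = \gamma^{-1}\bigl(-f + \int f\,d\mu\bigr)$ for every polynomial $f$.
   Context: $L_\mu[f](x) = \int \frac{f(x)-f(y)}{x-y}\,d\mu(y)$ on polynomials. For a probability measure $\nu$, $\beta\in\mathbb{R}$, $\gamma>0$, $\Phi_{\beta,\gamma}[\nu]$ is the probability measure $\mu$ with Cauchy transform $G_\mu(z) = 1/(z-\beta-\gamma G_\nu(z))$, where $G_\mu(z)=\int\frac{d\mu(x)}{z-x}$; equivalently, if $\nu$ has Jacobi parameters $(\beta_0,\beta_1,\dots),(\gamma_1,\gamma_2,\dots)$ (meaning its monic orthogonal polynomials satisfy $xP_n = P_{n+1}+\beta_nP_n+\gamma_nP_{n-1}$), then $\mu$ has Jacobi parameters $(\beta,\beta_0,\beta_1,\dots),(\gamma,\gamma_1,\gamma_2,\dots)$. *)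

(* Defs.v *)
From HB Require Import structures.
From mathcomp Require Import all_boot all_order all_algebra.
Set Implicit Arguments. Unset Strict Implicit. Unset Printing Implicit Defensive.
Import Order.TTheory GRing.Theory Num.Theory.
Local Open Scope ring_scope.

(* A measure is represented by its moment sequence  s n = \int x^n d(measure). *)

(* \int f d(measure) for a polynomial f *)
Definition integ (R : nzRingType) (s : nat -> R) (f : {poly R}) : R :=
  \sum_(k < size f) f`_k * s k.

(* L_s[f](x) = \int (f(x)-f(y))/(x-y) ds(y); since
   (x^k - y^k)/(x-y) = \sum_(j<k) x^j y^(k-1-j), this is *)
Definition Lop (R : nzRingType) (s : nat -> R) (f : {poly R}) : {poly R} :=
  \sum_(k < size f) f`_k *: \sum_(j < k) s (k.-1 - j)%N *: 'X^(nat_of_ord j).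

(* Moments of Phi_{beta,gamma}[nu], from the Cauchy transform identity
   G_mu(z) (z - beta - gamma G_nu(z)) = 1 read as formal power series in 1/z
   (G(z) = \sum_n m_n z^(-n-1)):
     m_0 = 1,  m_{n+1} = beta m_n + gamma \sum_{i+j = n-1} m_i s_j.
   phi_seq n = [:: m_0; ...; m_n]. *)
Fixpoint phi_seq (R : nzRingType) (beta gamma : R) (s : nat -> R) (n : nat)
  : seq R :=
  match n with
  | 0 => [:: 1]
  | n'.+1 =>
      let t := phi_seq beta gamma s n' in
      rcons t (beta * t`_n' + gamma * \sum_(i < n') t`_i * s (n'.-1 - i)%N)
  end.

Definition phi_mom (R : nzRingType) (beta gamma : R) (s : nat -> R) (n : nat) : R :=
  (phi_seq beta gamma s n)`_n.

Definition cs_prob_inf_supp_moments (R : realFieldType) (s : nat -> R) : Prop :=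
  [/\ s 0%N = 1,
      (forall p : {poly R}, p != 0 -> 0 < integ s (p * p)) &
      exists C r : R, forall n, `|s n| <= C * r ^+ n].

Definition monic_OP (R : nzRingType) (m : nat -> R) (n : nat) (P : {poly R}) : Prop :=
  [/\ size P = n.+1, P \is monic &
      forall k, (k < n)%N -> integ m (P * 'X^k) = 0].

(* Main.v *)
Require Import Defs.
From HB Require Import structures.
From mathcomp Require Import all_boot all_order all_algebra.
From mathcomp Require Import zify ring.
Import Order.TTheory GRing.Theory Num.Theory.
Local Open Scope ring_scope.

Section Aux.
Context {R : comNzRingType}.
Implicit Types (s : nat -> R) (f g : {poly R}).

Definition Lk s (k : nat) : {poly R} := \sum_(j < k) s (k.-1 - j)%N *: 'X^(nat_of_ord j).

Lemma sum_widen (V : zmodType) n N (F : nat -> V) : (n <= N)%N ->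
  (forall k, (n <= k)%N -> F k = 0) -> \sum_(k < n) F k = \sum_(k < N) F k.
Proof.
move=> hn hF; rewrite (big_ord_widen N F hn) big_mkcond; apply: eq_bigr => i _.
by case: ifP => // /negbT; rewrite -leqNgt => h; rewrite hF.
Qed.

Lemma LopE s f N : (size f <= N)%N -> Lop s f = \sum_(k < N) f`_k *: Lk s k.
Proof. by move=> h; apply: (@sum_widen _ _ _ (fun k => f`_k *: Lk s k)) => // k hk; rewrite nth_default // scale0r. Qed.

Lemma integE s f N : (size f <= N)%N -> integ s f = \sum_(k < N) f`_k * s k.
Proof. by move=> h; apply: (@sum_widen _ _ _ (fun k => f`_k * s k)) => // k hk; rewrite nth_default // mul0r. Qed.

Lemma size_lin a f g : (size (a *: f + g)%R <= maxn (size f) (size g))%N.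
Proof.
apply: leq_trans (size_polyD _ _) _; rewrite geq_max leq_maxr andbT.
exact: leq_trans (size_scale_leq _ _) (leq_maxl _ _).
Qed.

Lemma Lop_lin s a f g : Lop s (a *: f + g) = a *: Lop s f + Lop s g.
Proof.
rewrite (LopE s _ _ (size_lin a f g)) (LopE s _ _ (leq_maxl (size f) (size g))).
rewrite (LopE s _ _ (leq_maxr (size f) (size g))) scaler_sumr -big_split.
by apply: eq_bigr => k _; rewrite coefD coefZ scalerDl scalerA.
Qed.

Lemma integ_lin s a f g : integ s (a *: f + g) = a * integ s f + integ s g.
Proof.
rewrite (integE s _ _ (size_lin a f g)) (integE s _ _ (leq_maxl (size f) (size g))).
rewrite (integE s _ _ (leq_maxr (size f) (size g))) mulr_sumr -big_split.
by apply: eq_bigr => k _; rewrite coefD coefZ mulrDl mulrA.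
Qed.

Lemma LopD s f g : Lop s (f + g) = Lop s f + Lop s g.
Proof. by have := Lop_lin s 1 f g; rewrite !scale1r. Qed.

Lemma Lop0 s : Lop s 0 = 0.
Proof. by rewrite /Lop size_poly0 big_ord0. Qed.

Lemma integ0 s : integ s 0 = 0.
Proof. by rewrite /integ size_poly0 big_ord0. Qed.

Lemma Lop_sum s n (c : nat -> R) (F : nat -> {poly R}) :
  Lop s (\sum_(k < n) c k *: F k) = \sum_(k < n) c k *: Lop s (F k).
Proof.
elim/big_rec2: _ => [|i y1 y2 _ <-]; first exact: Lop0.
exact: Lop_lin.
Qed.

Lemma integ_sum s n (c : nat -> R) (F : nat -> {poly R}) :
  integ s (\sum_(k < n) c k *: F k) = \sum_(k < n) c k * integ s (F k).
Proof.
elim/big_rec2: _ => [|i y1 y2 _ <-]; first exact: integ0.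
exact: integ_lin.
Qed.

Lemma LopXn s n : Lop s 'X^n = Lk s n.
Proof.
rewrite (@LopE s _ n.+1) ?size_polyXn // big_ord_recr /= coefXn eqxx scale1r.
rewrite big1 ?add0r // => i _; rewrite coefXn.
by have := ltn_ord i; rewrite ltn_neqAle => /andP[/negbTE -> _]; rewrite scale0r.
Qed.

Lemma integXn s n : integ s 'X^n = s n.
Proof.
rewrite (@integE s _ n.+1) ?size_polyXn // big_ord_recr /= coefXn eqxx mul1r.
rewrite big1 ?add0r // => i _; rewrite coefXn.
by have := ltn_ord i; rewrite ltn_neqAle => /andP[/negbTE -> _]; rewrite mul0r.
Qed.

Lemma Lop_const s c : Lop s c%:P = 0.
Proof.
rewrite (@LopE s _ 1) ?size_polyC ?leq_b1 // big_ord1 /Lk big_ord0.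
by rewrite scaler0.
Qed.

Lemma LkS s k : Lk s k.+1 = 'X * Lk s k + (s k)%:P.
Proof.
rewrite /Lk big_ord_recl /= subn0 expr0 -alg_polyC addrC; congr (_ + _).
rewrite mulr_sumr; apply: eq_bigr => j _ /=.
by rewrite -scalerAr -exprS /bump leq0n add1n; congr (s _ *: _); lia.
Qed.

Lemma Lk0 s : Lk s 0 = 0.
Proof. by rewrite /Lk big_ord0. Qed.

Lemma polyE f : f = \sum_(i < size f) f`_i *: 'X^i.
Proof. by rewrite -{1}(coefK f) poly_def. Qed.

Lemma LopX s g : Lop s ('X * g) = 'X * Lop s g + (integ s g)%:P.
Proof.
rewrite {1}[g]polyE mulr_sumr.
rewrite (eq_bigr (fun i : 'I_(size g) => g`_i *: 'X^(i.+1))); last first.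
  by move=> i _; rewrite -scalerAr -exprS.
rewrite (Lop_sum s _ (fun i => g`_i) (fun i => 'X^(i.+1))).
have -> : Lop s g = \sum_(i < size g) g`_i *: Lk s i by [].
rewrite /integ rmorph_sum mulr_sumr -big_split; apply: eq_bigr => i _ /=.
by rewrite LopXn LkS scalerDr scalerAr polyCM mul_polyC.
Qed.

Lemma integLk s m k : integ s (Lk m k) = \sum_(i < k) m i * s (k.-1 - i)%N.
Proof.
rewrite /Lk (integ_sum s _ (fun j => m (k.-1 - j)%N) (fun j => 'X^j)).
rewrite (reindex_inj rev_ord_inj) /=; apply: eq_bigr => i _.
rewrite integXn; have := ltn_ord i; move: (nat_of_ord i) => j hj.
have -> : (k.-1 - (k - j.+1))%N = j by lia.
by have -> : (k - j.+1)%N = (k.-1 - j)%N by lia.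
Qed.

End Aux.

Lemma size_phi (R : nzRingType) (b c : R) s n : size (phi_seq b c s n) = n.+1.
Proof. by elim: n => //= n IH; rewrite size_rcons IH. Qed.

Lemma nth_phi (R : nzRingType) (b c : R) s n i : (i <= n)%N ->
  (phi_seq b c s n)`_i = phi_mom b c s i.
Proof.
elim: n => [|n IH]; first by rewrite leqn0 => /eqP ->.
rewrite leq_eqVlt => /orP[/eqP -> //|hi] /=.
by rewrite nth_rcons size_phi hi IH.
Qed.

Lemma phi_momS (R : nzRingType) (b c : R) s k :
  phi_mom b c s k.+1 =
  b * phi_mom b c s k + c * \sum_(i < k) phi_mom b c s i * s (k.-1 - i)%N.
Proof.
rewrite /phi_mom /= nth_rcons size_phi ltnn eqxx nth_phi //; congr (_ + _ * _).
by apply: eq_bigr => i _; rewrite nth_phi // ltnW.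
Qed.

Lemma claim (R : fieldType) (s : nat -> R) (beta gamma : R) k :
  let m := phi_mom beta gamma s in
  gamma *: Lop s (Lk m k) - ('X - beta%:P) * Lk m k = (m k)%:P - 'X^k.
Proof.
move=> m; elim: k => [|k IH].
  by rewrite Lk0 Lop0 scaler0 mulr0 subrr /m /phi_mom /= subrr.
rewrite LkS LopD Lop_const addr0 LopX /m phi_momS -integLk -/m.
move: IH; set A := Lop s (Lk m k); set L := Lk m k; set I := integ s L => IH.
have HA : gamma *: A = (m k)%:P - 'X^k + ('X - beta%:P) * L.
  by rewrite -IH addrNK.
rewrite scalerDr scalerAr HA -!mul_polyC !polyCD !polyCM exprS.
ring.
Qed.

Lemma key (R : fieldType) (s : nat -> R) (beta gamma : R) f :
  let m := phi_mom beta gamma s in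
  gamma *: Lop s (Lop m f) - ('X - beta%:P) * Lop m f = (integ m f)%:P - f.
Proof.
move=> m.
have E := claim _ s beta gamma.
transitivity (\sum_(k < size f) f`_k *:
   (gamma *: Lop s (Lk m k) - ('X - beta%:P) * Lk m k)).
  rewrite -[Lop m f]/(\sum_(k < size f) f`_k *: Lk m k).
  rewrite (Lop_sum s _ (fun k => f`_k) (Lk m)).
  rewrite scaler_sumr mulr_sumr -sumrB; apply: eq_bigr => k _.
  by rewrite scalerBr !scalerA mulrC -scalerAr.
rewrite (eq_bigr (fun k : 'I_(size f) => f`_k *: ((m k)%:P - 'X^k))); last first.
  by move=> k _; rewrite E.
rewrite (eq_bigr (fun k : 'I_(size f) => f`_k *: (m k)%:P - f`_k *: 'X^k)); last first.
  by move=> k _; rewrite scalerBr.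
rewrite sumrB -polyE /integ rmorph_sum; congr (_ - _); apply: eq_bigr => k _.
by rewrite -mul_polyC rmorphM.
Qed.

Theorem proposition4p4 (R : realFieldType) (s : nat -> R) (beta gamma : R) :
  cs_prob_inf_supp_moments s -> 0 < gamma ->
  let m := phi_mom beta gamma s in
  let Q := fun f : {poly R} =>
    Lop s (Lop m f) - gamma^-1 *: (('X - beta%:P) * Lop m f) in
  (forall (n : nat) (P : {poly R}), (1 <= n)%N -> monic_OP m n P ->
     Q P = - gamma^-1 *: P)
  /\ (forall P : {poly R}, monic_OP m 0 P -> Q P = 0)
  /\ (forall f : {poly R}, Q f = gamma^-1 *: (- f + (integ m f)%:P)).
Proof.
move=> _ g0 m Q.
have g0' : gamma != 0 by rewrite gt_eqF.
have H3 : forall f : {poly R}, Q f = gamma^-1 *: (- f + (integ m f)%:P).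
  move=> f; rewrite addrC -(key _ s beta gamma f) -/m scalerBr scalerA mulVf //.
  by rewrite scale1r.
split; last split => //.
  move=> n P hn [_ _ hP]; rewrite H3.
  have := hP 0%N hn; rewrite expr0 mulr1 => ->.
  by rewrite addr0 scalerN scaleNr.
move=> P [hP _ _]; rewrite H3.
have -> : integ m P = P`_0.
  by rewrite /integ hP big_ord1 /m /phi_mom /= mulr1.
by rewrite -size1_polyC ?hP // addNr scaler0.
Qed.
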